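(* Let $n_1>n_2\geq 2$ be integers. Let $X$ consist of the vectors $(j,j,0),(j,j,1)$ for $j\in\{1,\ldots,n_2\}$, the vectors $(n_2+k,1,0),(n_2+k,n_2,1)$ for $k\in\{0,1,\ldots,n_1-n_2-1\}$, and the vector $(n_1,n_2,1)$. Let $\mathcal B$ consist of all $3$-element subsets $\{\alpha_1,\alpha_2,\alpha_3\}\subseteq X$ such that for each coordinate $j\in\{1,2,3\}$ the set $\{\alpha_{1(j)},\alpha_{2(j)},\alpha_{3(j)}\}$ of $j$-th entries has exactly $2$ elements, together with the additional triple $\{(1,1,0),(n_2,1,0),(n_2,n_2,0)\}$. Then the $3$-uniform bi-hypergraph $\mathcal H_{n_1,n_2}=(X,\mathcal B)$ is a one-realization of $\{n_1,n_2\}$.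
   Context: A bi-hypergraph $(X,\mathcal B)$ is a mixed hypergraph whose $\mathcal C$-edges and $\mathcal D$-edges both equal $\mathcal B$. A strict $k$-coloring is a partition of $X$ into exactly $k$ nonempty classes such that every edge of $\mathcal B$ contains two vertices of a common class and two vertices of distinct classes. The feasible set is the set of $k$ admitting a strict $k$-coloring; the chromatic spectrum lists, for $k=1,\ldots,\max$ of the feasible set, the number of strict $k$-colorings (as partitions). A one-realization of a set $S$ is a mixed hypergraph whose feasible set is $S$ and whose chromatic spectrum has all entries in $\{0,1\}$. $\alpha_{l(j)}$ denotes the $j$-th entry of the vector $\alpha_l$. *)

(* Defs.v *)
From mathcomp Require Import all_boot.
Set Implicit Arguments. Unset Strict Implicit. Unset Printing Implicit Defensive.

Section BiHypergraph.
Variable T : finType.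

(* P is a strict coloring of the bi-hypergraph (X,B): P is a partition of X into
   nonempty classes (finset's [partition P X] includes set0 \notin P), and every
   edge contains two (distinct) vertices of a common class and two vertices of
   distinct classes. *)
Definition strict_coloring (X : {set T}) (B : {set {set T}}) (P : {set {set T}}) : bool :=
  partition P X &&
  [forall E in B,
     [exists x in E, exists y in E, (x != y) && (pblock P x == pblock P y)] &&
     [exists x in E, exists y in E, pblock P x != pblock P y]].

(* number of strict k-colorings, counted as partitions (the k-th spectrum entry) *)
Definition nb_strict_colorings (X : {set T}) (B : {set {set T}}) (k : nat) : nat :=
  #|[set P : {set {set T}} | strict_coloring X B P && (#|P| == k)]|.

Definition feasible (X : {set T}) (B : {set {set T}}) (k : nat) : Prop :=
  exists P : {set {set T}}, strict_coloring X B P /\ #|P| = k.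

Definition one_realization (X : {set T}) (B : {set {set T}}) (S : pred nat) : Prop :=
  (forall k, feasible X B k <-> S k) /\
  (forall k, nb_strict_colorings X B k \in [:: 0; 1]).
End BiHypergraph.

(* Ambient finite type of triples (a,b,c) with a,b <= n1 and c <= 1;
   all vertices of H_{n1,n2} live there since n2 < n1. *)
Definition vtx (n1 : nat) : finType := ('I_n1.+1 * 'I_n1.+1 * 'I_2)%type.

Definition trip (n1 : nat) (v : vtx n1) : nat * nat * nat :=
  (nat_of_ord v.1.1, nat_of_ord v.1.2, nat_of_ord v.2).

Definition mkv (n1 a b c : nat) : vtx n1 := (inord a, inord b, inord c).

Definition inX (n1 n2 : nat) (t : nat * nat * nat) : bool :=
  [|| [exists j : 'I_n2.+1, (0 < j) && ((t == (nat_of_ord j, nat_of_ord j, 0))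
                                        || (t == (nat_of_ord j, nat_of_ord j, 1)))],
      [exists k : 'I_(n1 - n2), (t == (n2 + k, 1, 0)) || (t == (n2 + k, n2, 1))]
    | t == (n1, n2, 1)].

Definition HX (n1 n2 : nat) : {set vtx n1} := [set v | inX n1 n2 (trip v)].

Definition HB (n1 n2 : nat) : {set {set vtx n1}} :=
  [set E : {set vtx n1} | [&& E \subset HX n1 n2, #|E| == 3,
                             #|[set x.1.1 | x in E]| == 2,
                             #|[set x.1.2 | x in E]| == 2 &
                             #|[set x.2 | x in E]| == 2]]
  :|: [set [set mkv n1 1 1 0; mkv n1 n2 1 0; mkv n1 n2 n2 0]].

(* Main.v *)
Require Import Defs.
From mathcomp Require Import all_boot zify.
Set Implicit Arguments. Unset Strict Implicit. Unset Printing Implicit Defensive.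

Definition two3 {U : eqType} (u v w : U) :=
  ((u == v) || (v == w) || (u == w)) && ~~ ((u == v) && (v == w)).

Ltac brute_rec :=
  match goal with
  | H : is_true (?a != ?a) |- _ => by rewrite eqxx in H
  | |- context [?x == ?y] =>
     case: (eqVneq x y) => [?|?]; [subst x|]; rewrite ?eqxx /=; brute_rec
  | _ => try done
  end.
Ltac brute := rewrite /two3; brute_rec.

Lemma card3_2 (T : finType) (a b c : T) : (#|[set a; b; c]| == 2) = two3 a b c.
Proof. rewrite -setUA !cardsU1 cards1 !inE; brute. Qed.

Lemma card3_3 (T : finType) (a b c : T) : a != b -> b != c -> a != c -> #|[set a; b; c]| = 3.
Proof. rewrite -setUA !cardsU1 cards1 !inE; brute. Qed.

Lemma two3_intro (T : finType) (U : eqType) (f : T -> U) x y z :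
  [exists u in [set x; y; z], exists w in [set x; y; z], (u != w) && (f u == f w)] ->
  [exists u in [set x; y; z], exists w in [set x; y; z], f u != f w] ->
  two3 (f x) (f y) (f z).
Proof.
move=> /existsP[u /andP[hu /existsP[w /andP[hw /andP[uw e]]]]].
move=> /existsP[u' /andP[hu' /existsP[w' /andP[hw' ne]]]].
move: hu hw hu' hw' uw e ne; rewrite !inE.
move=> /orP[/orP[]|]/eqP-> /orP[/orP[]|]/eqP-> /orP[/orP[]|]/eqP-> /orP[/orP[]|]/eqP->;
  move: (f x) (f y) (f z) => A B C; rewrite ?eqxx //; brute.
Qed.

Lemma two3_nat (a b c : nat) :
  (a = b \/ b = c \/ a = c) /\ ~ (a = b /\ b = c) -> two3 a b c.
Proof.
rewrite /two3; lia.
Qed.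

Lemma card_preim (T U : finType) (g : T -> U) (D : {set T}) :
  #|preim_partition g D| = #|g @: D|.
Proof.
rewrite /preim_partition /equivalence_partition.
have -> : [set [set y in D | g x == g y] | x in D] =
          [set [set y in D | v == g y] | v in g @: D].
  by rewrite -imset_comp.
apply: card_in_imset => v w /imsetP[x hx ->] /imsetP[y hy ->] e.
have : y \in [set z in D | g x == g z] by rewrite e inE hy eqxx.
by rewrite inE => /andP[_ /eqP].
Qed.

Lemma pblock_preim (T U : finType) (g : T -> U) (D : {set T}) x y :
  x \in D -> y \in D ->
  (pblock (preim_partition g D) x == pblock (preim_partition g D) y) = (g x == g y).
Proof.
move=> hx hy; have hp := preim_partitionP g D.
have [/eqP hc ht _] := and3P hp.
rewrite eq_pblock ?hc //.
apply: (pblock_equivalence_partition _ hx hy).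
by move=> a b c _ _ _; split=> // /eqP->.
Qed.

Lemma part_rel (T U : finType) (g : T -> U) (P : {set {set T}}) (D : {set T}) :
  partition P D ->
  (forall x y, x \in D -> y \in D -> (pblock P x == pblock P y) = (g x == g y)) ->
  P = preim_partition g D.
Proof.
move=> hp hr; rewrite -{1}(preim_partition_pblock hp).
rewrite /preim_partition /equivalence_partition.
apply: eq_in_imset => x hx; apply/setP => y; rewrite !inE.
by case hy: (y \in D) => //=; apply: hr.
Qed.

Lemma ex_pair (T U : finType) (g : T -> U) (E : {set T}) :
  #|E| = 3 -> #|g @: E| = 2 ->
  [exists x in E, exists y in E, (x != y) && (g x == g y)] /\
  [exists x in E, exists y in E, g x != g y].
Proof.
move=> hE hg; split.
- apply: contraT => H.
  have inj : {in E &, injective g}.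
    move=> x y hx hy e; apply/eqP; apply: contraNT H => nxy.
    apply/existsP; exists x; rewrite hx /=; apply/existsP; exists y.
    by rewrite hy nxy /= e eqxx.
  by move: (card_in_imset inj); rewrite hE hg.
- apply: contraT => H.
  have : E != set0 by apply/eqP => e; move: hE; rewrite e cards0.
  case/set0Pn => x0 hx0.
  have sub : g @: E \subset [set g x0].
    apply/subsetP => _ /imsetP[y hy ->]; rewrite inE.
    apply: contraNT H => ne; apply/existsP; exists y; rewrite hy /=.
    by apply/existsP; exists x0; rewrite hx0.
  by move: (subset_leq_card sub); rewrite hg cards1.
Qed.

Section Logic.
Variable U : eqType.

Lemma L_S0 (A1 B1 C AN BN : U) : two3 A1 B1 AN -> two3 A1 B1 BN -> two3 A1 C BN ->
  two3 A1 AN BN -> two3 B1 C AN -> two3 B1 C BN -> two3 B1 AN BN -> two3 A1 C AN ->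
  [&& A1 == B1, AN == BN, A1 != AN & (C == A1) || (C == AN)].
Proof. brute. Qed.
Lemma L_mid (Aj Bj A1 B1 AN BN : U) : two3 Aj A1 B1 -> two3 Aj AN BN -> two3 Bj A1 B1 ->
  two3 Bj AN BN -> two3 Aj Bj A1 -> A1 == B1 -> AN == BN -> A1 != AN -> Aj == Bj.
Proof. brute. Qed.
Lemma L_aneq (Ai Aj Bj : U) : two3 Ai Aj Bj -> Aj == Bj -> Ai != Aj.
Proof. brute. Qed.
Lemma K2_c (CN A1 AN BN Cm : U) : CN == A1 -> AN == BN -> A1 != AN -> two3 Cm CN BN ->
  two3 Cm AN BN -> Cm == A1.
Proof. brute. Qed.
Lemma K2_d (A1 B1 CN AN Dm : U) : A1 == B1 -> CN == A1 -> A1 != AN -> two3 Dm A1 B1 ->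
  two3 Dm CN AN -> Dm == AN.
Proof. brute. Qed.
Lemma K1_cd (A1 B1 CN AN Cm Dm : U) : A1 == B1 -> CN == AN -> A1 != AN -> two3 Cm Dm A1 ->
  two3 Cm Dm AN -> two3 Dm CN AN -> two3 Dm A1 B1 -> Cm == Dm.
Proof. brute. Qed.
Lemma K1_ad (Ai Bi Dj : U) : two3 Ai Bi Dj -> Ai == Bi -> Dj != Ai.
Proof. brute. Qed.
Lemma K1_Nd (CN AN Dj : U) : CN == AN -> two3 Dj CN AN -> Dj != AN.
Proof. brute. Qed.
Lemma K1_dd (Ci Di Dj : U) : Ci == Di -> two3 Ci Di Dj -> Dj != Di.
Proof. brute. Qed.
End Logic.

Section Main.
Variables n1 n2 : nat.
Hypothesis h2 : 2 <= n2.
Hypothesis h12 : n2 < n1.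

Local Notation X := (HX n1 n2).
Local Notation HB := (HB n1 n2).
Local Notation p1 v := (nat_of_ord (v : vtx n1).1.1).
Local Notation p2 v := (nat_of_ord (v : vtx n1).1.2).
Local Notation p3 v := (nat_of_ord (v : vtx n1).2).

Lemma p1_le (v : vtx n1) : p1 v <= n1.
Proof. by have := ltn_ord v.1.1; rewrite ltnS. Qed.
Lemma p2_le (v : vtx n1) : p2 v <= n1.
Proof. by have := ltn_ord v.1.2; rewrite ltnS. Qed.
Lemma p3_le (v : vtx n1) : p3 v <= 1.
Proof. by have := ltn_ord v.2; rewrite ltnS. Qed.

Lemma vtx_eq (x y : vtx n1) : p1 x = p1 y -> p2 x = p2 y -> p3 x = p3 y -> x = y.
Proof.
case: x => [[x1 x2] x3]; case: y => [[y1 y2] y3] /= e1 e2 e3.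
by rewrite (val_inj e1) (val_inj e2) (val_inj e3).
Qed.

Lemma p1_mkv a b c : a <= n1 -> p1 (mkv n1 a b c) = a.
Proof. by move=> h; rewrite /mkv /= inordK. Qed.
Lemma p2_mkv a b c : b <= n1 -> p2 (mkv n1 a b c) = b.
Proof. by move=> h; rewrite /mkv /= inordK. Qed.
Lemma p3_mkv a b c : c <= 1 -> p3 (mkv n1 a b c) = c.
Proof. by move=> h; rewrite /mkv /= inordK. Qed.

Lemma vE (v : vtx n1) : v = mkv n1 (p1 v) (p2 v) (p3 v).
Proof.
by apply: vtx_eq; rewrite ?p1_mkv ?p2_mkv ?p3_mkv ?p1_le ?p2_le ?p3_le.
Qed.

Definition Q (v : vtx n1) : Prop :=
  (1 <= p1 v <= n2 /\ p2 v = p1 v) \/ (n2 <= p1 v < n1 /\ p2 v = 1 /\ p3 v = 0) \/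
  (n2 < p1 v <= n1 /\ p2 v = n2 /\ p3 v = 1).

Lemma inXP v : v \in X <-> Q v.
Proof.
case: v => [[x1 x2] x3]; rewrite inE /inX /trip /Q /=.
have := ltn_ord x1; have := ltn_ord x3.
move: (nat_of_ord x1) (nat_of_ord x2) (nat_of_ord x3) => a b c ha hc.
split.
- case/or3P.
  + case/existsP=> j /andP[j0 /orP[] /eqP [e1 e2 e3]];
      rewrite e1 e2 e3; have := ltn_ord j; lia.
  + case/existsP=> k /orP[] /eqP [e1 e2 e3]; rewrite e1 e2 e3; have := ltn_ord k; lia.
  + move/eqP => [e1 e2 e3]; rewrite e1 e2 e3; lia.
- case=> [[h1 h3]|[[h1 [h3 h4]]|[h1 [h3 h4]]]].
  + apply/or3P; apply: Or31; apply/existsP.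
    have hj : a < n2.+1 by lia.
    exists (Ordinal hj); rewrite /= !xpair_eqE; lia.
  + apply/or3P; apply: Or32; apply/existsP.
    have hk : a - n2 < n1 - n2 by lia.
    exists (Ordinal hk); rewrite /= !xpair_eqE; lia.
  + have [e|ne] := eqVneq a n1.
      apply/or3P; apply: Or33; rewrite !xpair_eqE; lia.
    apply/or3P; apply: Or32; apply/existsP.
    have hk : a - n2 < n1 - n2 by lia.
    exists (Ordinal hk); rewrite /= !xpair_eqE; lia.
Qed.

Lemma edgeB (x y z : vtx n1) : x \in X -> y \in X -> z \in X ->
  x != y -> y != z -> x != z -> two3 x.1.1 y.1.1 z.1.1 ->
  two3 x.1.2 y.1.2 z.1.2 -> two3 x.2 y.2 z.2 -> [set x; y; z] \in HB.
Proof.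
move=> hx hy hz xy yz xz t1 t2 t3.
rewrite /Defs.HB inE; apply/orP; left; rewrite inE; apply/and5P; split.
- by apply/subsetP => u /setUP[/setUP[]|] /set1P->.
- by rewrite card3_3.
- by rewrite !imsetU !imset_set1 card3_2.
- by rewrite !imsetU !imset_set1 card3_2.
- by rewrite !imsetU !imset_set1 card3_2.
Qed.

Definition T3 (a b c : nat) := (a = b \/ b = c \/ a = c) /\ ~ (a = b /\ b = c).

Lemma two3_ord m (a b c : 'I_m) : T3 a b c -> two3 a b c.
Proof. by move/two3_nat; rewrite /two3 !val_eqE. Qed.

Lemma tw P : strict_coloring X HB P -> forall x y z : vtx n1,
  Q x -> Q y -> Q z ->
  ~ (p1 x = p1 y /\ p2 x = p2 y /\ p3 x = p3 y) ->
  ~ (p1 y = p1 z /\ p2 y = p2 z /\ p3 y = p3 z) ->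
  ~ (p1 x = p1 z /\ p2 x = p2 z /\ p3 x = p3 z) ->
  T3 (p1 x) (p1 y) (p1 z) -> T3 (p2 x) (p2 y) (p2 z) -> T3 (p3 x) (p3 y) (p3 z) ->
  two3 (pblock P x) (pblock P y) (pblock P z).
Proof.
move=> /andP[_ /forallP hP] x y z /inXP hx /inXP hy /inXP hz dxy dyz dxz t1 t2 t3.
have hE : [set x; y; z] \in HB.
  apply: edgeB => //; try exact: two3_ord.
  - by apply/eqP => e; apply: dxy; rewrite e.
  - by apply/eqP => e; apply: dyz; rewrite e.
  - by apply/eqP => e; apply: dxz; rewrite e.
have /implyP /(_ hE) /andP[k1 k2] := hP [set x; y; z].
exact: two3_intro.
Qed.


Lemma tw_extra P : strict_coloring X HB P ->
  two3 (pblock P (mkv n1 1 1 0)) (pblock P (mkv n1 n2 1 0)) (pblock P (mkv n1 n2 n2 0)).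
Proof.
move=> /andP[_ /forallP hP].
have hE : [set mkv n1 1 1 0; mkv n1 n2 1 0; mkv n1 n2 n2 0] \in HB.
  by rewrite /Defs.HB inE; apply/orP; right; rewrite inE.
have /implyP /(_ hE) /andP[k1 k2] := hP [set mkv n1 1 1 0; mkv n1 n2 1 0; mkv n1 n2 n2 0].
exact: two3_intro.
Qed.


Lemma p2_range v : v \in X -> 1 <= p2 v <= n2.
Proof. by move/inXP; rewrite /Q; lia. Qed.
Lemma p1_range v : v \in X -> 1 <= p1 v <= n1.
Proof. by move/inXP; rewrite /Q; lia. Qed.

Section Col.
Variable P : {set {set vtx n1}}.
Hypothesis hP : strict_coloring X HB P.
Local Notation col := (pblock P).
Local Notation va j := (mkv n1 j j 0).
Local Notation vb j := (mkv n1 j j 1).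
Local Notation vc j := (mkv n1 j 1 0).
Local Notation vd j := (mkv n1 j n2 1).

Ltac disj3 := first [left; lia | right; left; lia | right; right; lia].
Ltac side := repeat match goal with
   | H : context [pblock _ _] |- _ => clear H
   | H : is_true (strict_coloring _ _ _) |- _ => clear H end;
 match goal with
 | |- _ /\ ~ _ => split; [disj3 | lia]
 | |- _ \/ _ => disj3
 | _ => lia end.
Ltac ed x y z := 
  have : two3 (col x) (col y) (col z) by
    apply: (tw hP); rewrite /Q /T3 /mkv /= ?inordK; side.

Lemma S0 : [&& col (va 1) == col (vb 1), col (va n2) == col (vb n2),
   col (va 1) != col (va n2) &
   (col (vc n2) == col (va 1)) || (col (vc n2) == col (va n2))].
Proof.
apply: L_S0 (tw_extra hP).
- ed (va 1) (vb 1) (va n2); exact.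
- ed (va 1) (vb 1) (vb n2); exact.
- ed (va 1) (vc n2) (vb n2); exact.
- ed (va 1) (va n2) (vb n2); exact.
- ed (vb 1) (vc n2) (va n2); exact.
- ed (vb 1) (vc n2) (vb n2); exact.
- ed (vb 1) (va n2) (vb n2); exact.
Qed.


Lemma ab_eq j : 1 <= j <= n2 -> col (va j) = col (vb j).
Proof.
move=> hj; have /and4P[s1 s2 s3 _] := S0.
case: (eqVneq j 1) => [->|n1j]; first exact/eqP.
case: (eqVneq j n2) => [->|nNj]; first exact/eqP.
ed (va j) (va 1) (vb 1) => e1.
ed (va j) (va n2) (vb n2) => e2.
ed (vb j) (va 1) (vb 1) => e3.
ed (vb j) (va n2) (vb n2) => e4.
ed (va j) (vb j) (va 1) => e5.
apply/eqP; exact: (L_mid e1 e2 e3 e4 e5 s1 s2 s3).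
Qed.

Lemma a_neq i j : 1 <= i <= n2 -> 1 <= j <= n2 -> i != j -> col (va i) != col (va j).
Proof.
move=> hi hj ij; ed (va i) (va j) (vb j) => e.
by apply: (L_aneq e); apply/eqP; apply: ab_eq.
Qed.

Lemma K2rel : col (vc n2) = col (va 1) -> forall v, v \in X -> col v = col (va (p2 v)).
Proof.
move=> hcN v /inXP hv; have /and4P[s1 s2 s3 _] := S0.
rewrite {1}(vE v); move: hv (p3_le v) (p1_le v); rewrite /Q.
move: (p1 v) (p2 v) (p3 v) => a b c.
case=> [[ha hb]|[[ha [hb hc]]|[ha [hb hc]]]] hc3 ha1.
- rewrite hb; case: c hc3 => [|[|//]] _ //.
  by rewrite -ab_eq.
- rewrite hb hc.
  case: (eqVneq a n2) => [->|ne]; first exact hcN.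
  ed (vc a) (vc n2) (vb n2) => e1.
  ed (vc a) (va n2) (vb n2) => e2.
  by apply/eqP; apply: (K2_c _ s2 s3 e1 e2); apply/eqP.
- rewrite hb hc.
  ed (vd a) (va 1) (vb 1) => e1.
  ed (vd a) (vc n2) (va n2) => e2.
  by apply/eqP; apply: (K2_d s1 _ s3 e1 e2); apply/eqP.
Qed.

Lemma K2eq : col (vc n2) = col (va 1) -> forall x y, x \in X -> y \in X ->
  (col x == col y) = (p2 x == p2 y).
Proof.
move=> hcN x y hx hy; rewrite (K2rel hcN hx) (K2rel hcN hy).
case: (eqVneq (p2 x) (p2 y)) => [->|ne]; first by rewrite eqxx.
by apply/negbTE/a_neq; rewrite ?p2_range.
Qed.

Definition rep i := if i <= n2 then va i else vd i.

Lemma cd_eq m : col (vc n2) = col (va n2) -> n2 < m < n1 -> col (vc m) = col (vd m).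
Proof.
move=> hcN hm; have /and4P[s1 s2 s3 _] := S0.
ed (vc m) (vd m) (va 1) => e1.
ed (vc m) (vd m) (va n2) => e2.
ed (vd m) (vc n2) (va n2) => e3.
ed (vd m) (va 1) (vb 1) => e4.
by apply/eqP; apply: (K1_cd s1 _ s3 e1 e2 e3 e4); apply/eqP.
Qed.

Lemma K1rel : col (vc n2) = col (va n2) -> forall v, v \in X -> col v = col (rep (p1 v)).
Proof.
move=> hcN v /inXP hv.
rewrite {1}(vE v); move: hv (p3_le v) (p1_le v); rewrite /Q /rep.
move: (p1 v) (p2 v) (p3 v) => a b c.
case=> [[ha hb]|[[ha [hb hc]]|[ha [hb hc]]]] hc3 ha1.
- have -> : a <= n2 by lia.
  rewrite hb; case: c hc3 => [|[|//]] _ //.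
  by rewrite -ab_eq.
- rewrite hb hc.
  case: (eqVneq a n2) => [->|ne]; first by rewrite leqnn.
  have -> : (a <= n2) = false by lia.
  apply: cd_eq => //; lia.
- rewrite hb hc.
  by have -> : (a <= n2) = false by lia.
Qed.

Lemma rep_neq i j : col (vc n2) = col (va n2) -> 1 <= i -> i < j -> j <= n1 ->
  col (rep i) != col (rep j).
Proof.
move=> hcN hi hij hj; rewrite /rep.
have [jN|jN] := leqP j n2.
  have -> : i <= n2 by lia.
  by apply: a_neq; lia.
have [iN|iN] := leqP i n2.
  rewrite eq_sym.
  case: (eqVneq i n2) => [->|ne].
    ed (vd j) (vc n2) (va n2) => e.
    by apply: (K1_Nd _ e); apply/eqP.
  ed (va i) (vb i) (vd j) => e.
  by apply: (K1_ad e); apply/eqP; apply: ab_eq; lia.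
rewrite eq_sym.
ed (vc i) (vd i) (vd j) => e.
by apply: (K1_dd _ e); apply/eqP; apply: (cd_eq hcN); lia.
Qed.

Lemma K1eq : col (vc n2) = col (va n2) -> forall x y, x \in X -> y \in X ->
  (col x == col y) = (p1 x == p1 y).
Proof.
move=> hcN x y hx hy; rewrite (K1rel hcN hx) (K1rel hcN hy).
have := p1_range hx; have := p1_range hy.
case: (ltngtP (p1 x) (p1 y)) => [lt|lt|->] r1 r2; last by rewrite !eqxx.
- by apply/negbTE/rep_neq => //; lia.
- by rewrite eq_sym; apply/negbTE/rep_neq => //; lia.
Qed.

Lemma main_rel : (forall x y, x \in X -> y \in X -> (col x == col y) = (p1 x == p1 y)) \/
                 (forall x y, x \in X -> y \in X -> (col x == col y) = (p2 x == p2 y)).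
Proof.
have /and4P[_ _ _ /orP[]/eqP h] := S0.
- by right; apply: K2eq.
- by left; apply: K1eq.
Qed.

End Col.

Definition g1 (v : vtx n1) : 'I_n1.+1 := v.1.1.
Definition g2 (v : vtx n1) : 'I_n1.+1 := v.1.2.
Definition P1 := preim_partition g1 X.
Definition P2 := preim_partition g2 X.

Lemma inord_neq a b : a <= n1 -> b <= n1 -> a != b -> (inord a : 'I_n1.+1) != inord b.
Proof.
move=> ha hb ne; apply/eqP => /(congr1 val); rewrite /= !inordK //; first by move/eqP; rewrite (negbTE ne).
Qed.

Lemma E0_sub : [set mkv n1 1 1 0; mkv n1 n2 1 0; mkv n1 n2 n2 0] \subset X.
Proof.
apply/subsetP => u /setUP[/setUP[]|] /set1P-> ; apply/inXP; rewrite /Q /mkv /= ?inordK; lia.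
Qed.

Lemma strict_of (g : vtx n1 -> 'I_n1.+1) :
  (forall E : {set vtx n1}, #|[set x.1.1 | x in E]| == 2 -> #|[set x.1.2 | x in E]| == 2 ->
     #|g @: E| == 2) ->
  (let E0 := [set mkv n1 1 1 0; mkv n1 n2 1 0; mkv n1 n2 n2 0] in
   [exists x in E0, exists y in E0, (x != y) && (g x == g y)] /\
   [exists x in E0, exists y in E0, g x != g y]) ->
  strict_coloring X HB (preim_partition g X).
Proof.
move=> hg h0; apply/andP; split; first exact: preim_partitionP.
apply/forallP => E; apply/implyP => hE.
have [sub [k1 k2]] : E \subset X /\
   ([exists x in E, exists y in E, (x != y) && (g x == g y)] /\
    [exists x in E, exists y in E, g x != g y]).
  move: hE; rewrite /Defs.HB inE => /orP[].
    rewrite inE => /and5P[s c3 c1 c2 _]; split => //.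
    by apply: ex_pair; apply/eqP => //; apply: hg.
  by rewrite inE => /eqP->; split; [exact: E0_sub | exact: h0].
have tr x y : x \in E -> y \in E ->
    (pblock (preim_partition g X) x == pblock (preim_partition g X) y) = (g x == g y).
  by move=> hx hy; apply: pblock_preim; apply: (subsetP sub).
apply/andP; split.
- move: k1 => /existsP[x /andP[hx /existsP[y /andP[hy H]]]].
  apply/existsP; exists x; rewrite hx /=; apply/existsP; exists y.
  by rewrite hy /= tr.
- move: k2 => /existsP[x /andP[hx /existsP[y /andP[hy H]]]].
  apply/existsP; exists x; rewrite hx /=; apply/existsP; exists y.
  by rewrite hy /= tr.
Qed.

Lemma mem3 (T : finType) (a b c x : T) : x \in [set a; b; c] = [|| x == a, x == b | x == c].
Proof. by rewrite !inE orbA. Qed.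

Lemma P1_strict : strict_coloring X HB P1.
Proof.
apply: strict_of => [E _ //|E0]; split.
- apply/existsP; exists (mkv n1 n2 1 0); rewrite mem3 eqxx orbT /=.
  apply/existsP; exists (mkv n1 n2 n2 0); rewrite mem3 eqxx !orbT /=.
  apply/andP; split; last by rewrite /g1 /mkv /= eqxx.
  apply/eqP => /(congr1 (fun v : vtx n1 => nat_of_ord v.1.2)); rewrite /mkv /= !inordK; lia.
- apply/existsP; exists (mkv n1 1 1 0); rewrite mem3 eqxx /=.
  apply/existsP; exists (mkv n1 n2 n2 0); rewrite mem3 eqxx !orbT /=.
  apply: inord_neq; lia.
Qed.

Lemma P2_strict : strict_coloring X HB P2.
Proof.
apply: strict_of => [E _ //|E0]; split.
- apply/existsP; exists (mkv n1 1 1 0); rewrite mem3 eqxx /=.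
  apply/existsP; exists (mkv n1 n2 1 0); rewrite mem3 eqxx !orbT /=.
  apply/andP; split; last by rewrite /g2 /mkv /= eqxx.
  apply/eqP => /(congr1 (fun v : vtx n1 => nat_of_ord v.1.1)); rewrite /mkv /= !inordK; lia.
- apply/existsP; exists (mkv n1 1 1 0); rewrite mem3 eqxx /=.
  apply/existsP; exists (mkv n1 n2 n2 0); rewrite mem3 eqxx !orbT /=.
  apply: inord_neq; lia.
Qed.

Lemma card_P1 : #|P1| = n1.
Proof.
rewrite /P1 card_preim.
have -> : g1 @: X = [set (inord k.+1 : 'I_n1.+1) | k : 'I_n1].
  apply/setP => i; apply/imsetP/imsetP => [[v hv ->]|[k _ ->]].
  - have r := p1_range hv.
    have hk : (p1 v).-1 < n1 by lia.
    exists (Ordinal hk) => //; apply: val_inj => /=; rewrite inordK; last by rewrite ltnS.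
    by rewrite prednK; [rewrite /g1 /g2 | case/andP: r].
  - have hk := ltn_ord k.
    case: (leqP k.+1 n2) => hkn.
      exists (mkv n1 k.+1 k.+1 0) => //; apply/inXP; rewrite /Q /mkv /= ?inordK; lia.
    exists (mkv n1 k.+1 n2 1) => //; apply/inXP; rewrite /Q /mkv /= ?inordK; lia.
rewrite card_imset ?card_ord //.
move=> k l /(congr1 val); rewrite /= !inordK ?ltnS //; case=> e; exact: val_inj.
Qed.

Lemma card_P2 : #|P2| = n2.
Proof.
rewrite /P2 card_preim.
have -> : g2 @: X = [set (inord k.+1 : 'I_n1.+1) | k : 'I_n2].
  apply/setP => i; apply/imsetP/imsetP => [[v hv ->]|[k _ ->]].
  - have r := p2_range hv.
    have hk : (p2 v).-1 < n2 by lia.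
    exists (Ordinal hk) => //; apply: val_inj => /=; rewrite inordK; last by rewrite ltnS (ltn_trans hk h12).
    by rewrite prednK; [rewrite /g1 /g2 | case/andP: r].
  - have hk := ltn_ord k.
    exists (mkv n1 k.+1 k.+1 0) => //; apply/inXP; rewrite /Q /mkv /= ?inordK; lia.
rewrite card_imset ?card_ord //.
move=> k l /(congr1 val); rewrite /= !inordK ?ltnS ?(ltn_trans (ltn_ord _) h12) //; case=> e; exact: val_inj.
Qed.

Lemma strict_is P : strict_coloring X HB P -> P = P1 \/ P = P2.
Proof.
move=> hP; have hp : partition P X by case/andP: hP.
case: (main_rel hP) => h; [left|right]; apply: part_rel => // x y hx hy; rewrite h //.
Qed.

Lemma final_main : one_realization X HB (fun k => (k == n1) || (k == n2)).
Proof.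
split.
- move=> k; split.
  + case=> P [hP <-]; case: (strict_is hP) => ->; rewrite ?card_P1 ?card_P2 eqxx ?orbT //.
  + case/orP => /eqP->; [exists P1; split; [exact: P1_strict|exact: card_P1]
                        |exists P2; split; [exact: P2_strict|exact: card_P2]].
- move=> k; rewrite /nb_strict_colorings.
  set S := [set P | _].
  have : #|S| <= 1.
    have [ek|nek] := eqVneq k n1.
      have sub : S \subset [set P1].
        apply/subsetP => P; rewrite inE => /andP[hP /eqP hk]; rewrite inE.
        case: (strict_is hP) => e; first by rewrite e.
        by move: hk; rewrite e card_P2; lia.
      by move: (subset_leq_card sub); rewrite cards1.
    have sub : S \subset [set P2].
      apply/subsetP => P; rewrite inE => /andP[hP /eqP hk]; rewrite inE.
      case: (strict_is hP) => e; last by rewrite e.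
      by move: hk; rewrite e card_P1 => hk; rewrite hk eqxx in nek.
    by move: (subset_leq_card sub); rewrite cards1.
  by case: #|S| => [|[|]].
Qed.


End Main.

Theorem lemma2p2 (n1 n2 : nat) :
  2 <= n2 -> n2 < n1 ->
  one_realization (HX n1 n2) (HB n1 n2) (fun k => (k == n1) || (k == n2)).
Proof. move=> h2 h12; exact: (final_main h2 h12). Qed.
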